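(* Let $G$, $\Sigma_o$, $S$ realized by $H=(Z,\Sigma,\xi,z_0)$, and $\Sigma_v\subseteq\Sigma_o$ be given, with All Attack Structure $M=(Q,\Sigma_M,f,q_0)$. For any attacker $A$ and any observation $\alpha\sigma\in P(\mathcal{L}(S_A/G))$ ($\sigma\in\Sigma_o$) such that $A$ is stealthy along $\alpha$, let $q_e=(q,\tilde q,z)=f(q_0,(\alpha\sigma)_A)$. Then $A$ is stealthy along $\alpha\sigma$ if and only if $q_e\notin Q_{\textsf{att}}$.
   Context: A plant is a finite automaton $G=(X,\Sigma,\delta,X_0)$ with partial transition function $\delta$ (extended to strings), initial states $X_0\subseteq X$; $\mathcal{L}(G,x_0)=\{s:\delta(x_0,s)\text{ defined}\}$, $\mathcal{L}(G)=\bigcup_{x_0\in X_0}\mathcal{L}(G,x_0)$. $\Sigma=\Sigma_o\dot\cup\Sigma_{uo}=\Sigma_c\dot\cup\Sigma_{uc}$, $P:\Sigma^*\to\Sigma_o^*$ the natural projection. A supervisor is $S:P(\mathcal{L}(G))\to\Gamma=\{\gamma\subseteq\Sigma:\Sigma_{uc}\subseteq\gamma\}$, realized by a deterministic automaton $H=(Z,\Sigma,\xi,z_0)$ with $\xi(z,\sigma)\neq z\Rightarrow\sigma\in\Sigma_o$ and $\Delta_H(\xi(z_0,s))=S(P(s))$ for $s\in\mathcal{L}(S/G)$ ($\Delta_H(z)$ = events defined at $z$). For any map $T$ from observable strings to subsets of $\Sigma$, $\mathcal{L}(T/G,x_0)$ is defined by $\epsilon\in\mathcal{L}(T/G,x_0)$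 and $s\sigma\in\mathcal{L}(T/G,x_0)$ iff $s\in\mathcal{L}(T/G,x_0)$, $s\sigma\in\mathcal{L}(G,x_0)$, $\sigma\in T(P(s))$; $\mathcal{L}(T/G)=\bigcup_{x_0}\mathcal{L}(T/G,x_0)$. The current-state estimate is $\mathcal{E}^C_{S/G}(\beta)=\{\delta(x_0,s):x_0\in X_0,s\in\mathcal{L}(S/G,x_0),P(s)=\beta\}$. An attacker, for vulnerable events $\Sigma_v\subseteq\Sigma_o$, is a map $A:P(\mathcal{L}(G))\to\Sigma_o\cup\{\epsilon\}$ with $A(\epsilon)=\epsilon$ and, for $\alpha\sigma\in P(\mathcal{L}(G))$, $A(\alpha\sigma)=\sigma$ if $\sigma\notin\Sigma_v$ and $A(\alpha\sigma)\in\Sigma_v\cup\{\epsilon\}$ if $\sigma\in\Sigma_v$. It induces $g_A(\epsilon)=\epsilon$, $g_A(\alpha\sigma)=g_A(\alpha)A(\alpha\sigma)$, and $S_A=S\circ g_A$. $A$ is stealthy along $\alpha\in P(\mathcal{L}(S_A/G))$ if $\mathcal{E}^C_{S/G}(g_A(\alpha))\neq\emptyset$. Operators: for $q\subseteq X$, $\gamma\subseteq\Sigma$, $\sigma\in\Sigma_o$: $\textsf{UR}_\gamma(q)=\{\delta(x,s):x\in q,s\in(\Sigma_{uo}\cap\gamma)^*\}$, $\textsf{NX}_\sigma(q)=\{\delta(x,\sigma):x\in q\}$, $\textsf{NX}_\epsilon(q)=q$, $\mathcal{O}(q,\gamma)=\{\sigma\in\Sigma_o\cap\gamma:\exists x\in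 q,\exists w\in(\Sigma_{uo}\cap\gamma)^*,\delta(x,w\sigma)\text{ defined}\}$. Augmented system: states $\tilde X\subseteq X_0\times X$, $\tilde X_0=\{(x_0,x_0)\}$, $\tilde\delta((x_0,x),\sigma)=(x_0,\delta(x,\sigma))$; $\widetilde{\textsf{UR}},\widetilde{\textsf{NX}},\mathcal{O}(\tilde q,\gamma)$ defined analogously. All Attack Structure: for $\sigma\in\Sigma_o$, $\hat\sigma$ is a doctored copy, $\hat\epsilon$ an erasure symbol; $\mathcal{V}(\sigma)=\{\hat\sigma':\sigma'\in\Sigma_v\}\cup\{\hat\epsilon\}$ if $\sigma\in\Sigma_v$, else $\{\hat\sigma\}$. $M=(Q,\Sigma_M,f,q_0)$ with $\Sigma_M=\Sigma_o\cup\{\hat\sigma\}\cup\{\hat\epsilon\}$, $q_0=(X_0,\tilde X_0,z_0)$, states reachable from $q_0$, $Q=Q_e\dot\cup Q_a$: environment states $(q,\tilde q,z)$, $q\subseteq X,\tilde q\subseteq\tilde X,z\in Z\cup\{z_{\textsf{att}}\}$ ($z_{\textsf{att}}$ new, $\Delta_H(z_{\textsf{att}})=\emptyset$); attack states $(q,\tilde q,z,\sigma)$. At $(q,\tilde q,z)$ enabled events are $\mathcal{O}(\tilde q,\Delta_H(z))$ if $z\in Z$, none if $z=z_{\textsf{att}}$, with $f((q,\tilde q,z),\sigma)=(q,\tilde q,z,\sigma)$. At $(q,\tilde q,z,\sigma)$ enabled events are $\mathcal{V}(\sigma)$, with $f((q,\tilde q,z,\sigma),\hat\sigma_a)=(q',\tilde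 q',z')$, $q'=\textsf{NX}_{\sigma_a}(\textsf{UR}_{\Delta_H(z)}(q))$, $\tilde q'=\widetilde{\textsf{NX}}_\sigma(\widetilde{\textsf{UR}}_{\Delta_H(z)}(\tilde q))$, $z'=\xi(z,\sigma_a)$ if $q'\ne\emptyset$ (with $\xi(z,\epsilon)=z$), $z'=z_{\textsf{att}}$ otherwise. $Q_{\textsf{att}}=\{(q,\tilde q,z)\in Q_e:z=z_{\textsf{att}}\}$ is the set of attack-revealing states. For an attacker $A$ and $\alpha=\sigma_1\cdots\sigma_n$, the extended string is $\alpha_A=\sigma_1\hat\sigma_{a1}\cdots\sigma_n\hat\sigma_{an}$ with $\sigma_{ai}=A(\sigma_1\cdots\sigma_i)$ (and $\hat\sigma_{ai}=\hat\epsilon$ when $\sigma_{ai}=\epsilon$). *)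

(* Defs.v *)
From HB Require Import structures.
From mathcomp Require Import all_boot.
From mathcomp Require Import boolp.

Set Implicit Arguments.
Unset Strict Implicit.
Unset Printing Implicit Defensive.

Section DES.

Variables (X Sigma Z : finType).
Variable delta : X -> Sigma -> option X.
Variable So : {set Sigma}.

Fixpoint deltas (x : X) (s : seq Sigma) : option X :=
  match s with
  | [::] => Some x
  | e :: s' => obind (fun y => deltas y s') (delta x e)
  end.

Definition inLG (x0 : X) (s : seq Sigma) : bool := deltas x0 s != None.

Definition P (s : seq Sigma) : seq Sigma := [seq e <- s | e \in So].

Inductive Lsup (T : seq Sigma -> {set Sigma}) (x0 : X) : seq Sigma -> Prop :=
| Lsup_nil : Lsup T x0 [::]
| Lsup_snoc s e : Lsup T x0 s -> inLG x0 (rcons s e) -> e \in T (P s) ->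
                  Lsup T x0 (rcons s e).

Definition inPLG (X0 : {set X}) (beta : seq Sigma) : Prop :=
  exists x0 s, [/\ x0 \in X0, inLG x0 s & P s = beta].

Definition inPLsup (T : seq Sigma -> {set Sigma}) (X0 : {set X})
  (beta : seq Sigma) : Prop :=
  exists x0 s, [/\ x0 \in X0, Lsup T x0 s & P s = beta].

Definition is_supervisor (Suc : {set Sigma}) (X0 : {set X})
  (S : seq Sigma -> {set Sigma}) : Prop :=
  forall beta, inPLG X0 beta -> Suc \subset S beta.

Definition estimate (S : seq Sigma -> {set Sigma}) (X0 : {set X})
  (beta : seq Sigma) (x : X) : Prop :=
  exists x0 s, [/\ x0 \in X0, Lsup S x0 s, P s = beta & deltas x0 s = Some x].

Variable xi : Z -> Sigma -> option Z.

Fixpoint xis (z : Z) (s : seq Sigma) : option Z :=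
  match s with
  | [::] => Some z
  | e :: s' => obind (fun y => xis y s') (xi z e)
  end.

Definition DeltaH (z : Z) : {set Sigma} := [set e | xi z e != None].

Definition realizes (X0 : {set X}) (S : seq Sigma -> {set Sigma}) (z0 : Z) : Prop :=
  (forall z e z', xi z e = Some z' -> z' != z -> e \in So) /\
  (forall x0 s, x0 \in X0 -> Lsup S x0 s ->
     exists z, xis z0 s = Some z /\ DeltaH z = S (P s)).

(* attackers: None encodes epsilon *)
Definition is_attacker (Sv : {set Sigma}) (X0 : {set X})
  (A : seq Sigma -> option Sigma) : Prop :=
  A [::] = None /\
  forall alpha e, inPLG X0 (rcons alpha e) ->
    (e \notin Sv -> A (rcons alpha e) = Some e) /\
    (e \in Sv -> match A (rcons alpha e) return Prop with
                 | Some e' => is_true (e' \in Sv)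
                 | None => True
                 end).

Definition oseq (o : option Sigma) : seq Sigma :=
  match o with Some e => [:: e] | None => [::] end.

Definition gA (A : seq Sigma -> option Sigma) (alpha : seq Sigma) : seq Sigma :=
  flatten [seq oseq (A (take n alpha)) | n <- iota 1 (size alpha)].

Definition SA (S : seq Sigma -> {set Sigma}) (A : seq Sigma -> option Sigma)
  : seq Sigma -> {set Sigma} := fun beta => S (gA A beta).

Definition stealthy (S : seq Sigma -> {set Sigma}) (X0 : {set X})
  (A : seq Sigma -> option Sigma) (alpha : seq Sigma) : Prop :=
  exists x, estimate S X0 (gA A alpha) x.

(* Sigma_M : observable events, doctored copies, erasure *)
Inductive symM := Ev of Sigma | Hat of Sigma | HatEps.

(* states; option Z with None = z_att *)
Inductive stM :=
| Env of {set X} & {set X * X} & option Z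
| Att of {set X} & {set X * X} & option Z & Sigma.

Definition DeltaH' (oz : option Z) : {set Sigma} :=
  match oz with Some z => DeltaH z | None => set0 end.

Definition uo_in (gamma : {set Sigma}) (w : seq Sigma) : bool :=
  all (fun e => (e \notin So) && (e \in gamma)) w.

Definition UR (gamma : {set Sigma}) (q : {set X}) : {set X} :=
  [set y | `[< exists x w, [/\ x \in q, uo_in gamma w & deltas x w = Some y] >]].

Definition URt (gamma : {set Sigma}) (qt : {set X * X}) : {set X * X} :=
  [set p | `[< exists p0 w, [/\ p0 \in qt, uo_in gamma w, p.1 = p0.1
                              & deltas p0.2 w = Some p.2] >]].

Definition NX (e : Sigma) (q : {set X}) : {set X} :=
  [set y | [exists x in q, delta x e == Some y]].

Definition NXa (oe : option Sigma) (q : {set X}) : {set X} :=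
  match oe with Some e => NX e q | None => q end.

Definition NXt (e : Sigma) (qt : {set X * X}) : {set X * X} :=
  [set p | [exists p0 in qt, (p0.1 == p.1) && (delta p0.2 e == Some p.2)]].

Definition Obs (qt : {set X * X}) (gamma : {set Sigma}) : {set Sigma} :=
  [set e | (e \in So) && (e \in gamma) &&
     `[< exists p w, [/\ p \in qt, uo_in gamma w & deltas p.2 (rcons w e) != None] >]].

Variable Sv : {set Sigma}.

(* V(sigma), with None encoding hat-epsilon and Some a encoding hat-a *)
Definition Vpred (e : Sigma) (oa : option Sigma) : bool :=
  if e \in Sv then match oa with Some a => a \in Sv | None => true end
  else oa == Some e.

Definition xiopt (oz : option Z) (oa : option Sigma) : option Z :=
  match oz, oa with
  | Some z, None => Some z
  | Some z, Some a => xi z a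
  | None, _ => None
  end.

Definition attstep (q : {set X}) (qt : {set X * X}) (oz : option Z) (e : Sigma)
  (oa : option Sigma) : option stM :=
  if Vpred e oa then
    let gamma := DeltaH' oz in
    let q' := NXa oa (UR gamma q) in
    let qt' := NXt e (URt gamma qt) in
    Some (Env q' qt' (if q' != set0 then xiopt oz oa else None))
  else None.

Definition fM (st : stM) (m : symM) : option stM :=
  match st, m with
  | Env q qt (Some z), Ev e =>
      if e \in Obs qt (DeltaH z) then Some (Att q qt (Some z) e) else None
  | Att q qt oz e, Hat a => attstep q qt oz e (Some a)
  | Att q qt oz e, HatEps => attstep q qt oz e None
  | _, _ => None
  end.

Definition frun (st : stM) (ms : seq symM) : option stM :=
  foldl (fun ost m => obind (fun s => fM s m) ost) (Some st) ms.

Definition q0M (X0 : {set X}) (z0 : Z) : stM :=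
  Env X0 [set p | (p.1 \in X0) && (p.2 == p.1)] (Some z0).

Definition hatsym (oa : option Sigma) : symM :=
  match oa with Some a => Hat a | None => HatEps end.

Definition extA (A : seq Sigma -> option Sigma) (alpha : seq Sigma) : seq symM :=
  flatten [seq [:: Ev p.2; hatsym (A (take p.1.+1 alpha))]
          | p <- zip (iota 0 (size alpha)) alpha].

Definition in_Qatt (st : stM) : bool :=
  match st with Env _ _ None => true | _ => false end.

End DES.

(* Main.v *)
Require Import Defs.
From mathcomp Require Import all_boot.
From mathcomp Require Import boolp.
Set Implicit Arguments.
Unset Strict Implicit.
Unset Printing Implicit Defensive.

Section Aux.
Variables (X Sigma Z : finType) (delta : X -> Sigma -> option X) (So : {set Sigma})
  (xi : Z -> Sigma -> option Z) (Sv : {set Sigma}).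

Lemma gA_rcons (A : seq Sigma -> option Sigma) al e :
  gA A (rcons al e) = gA A al ++ oseq (A (rcons al e)).
Proof.
rewrite /gA size_rcons -(addn1 (size al)) iotaD map_cat flatten_cat /= cats0 add1n.
congr (_ ++ _); last by rewrite take_oversize // size_rcons.
congr flatten; apply/eq_in_map => k; rewrite mem_iota => /andP [_ Hk].
by rewrite -cats1 takel_cat //; rewrite add1n ltnS in Hk.
Qed.

Lemma extA_rcons (A : seq Sigma -> option Sigma) al e :
  extA A (rcons al e) = extA A al ++ [:: Ev e; hatsym (A (rcons al e))].
Proof.
rewrite /extA size_rcons -(addn1 (size al)) iotaD add0n /= cats1.
rewrite zip_rcons ?size_iota // map_rcons -cats1 flatten_cat /=.
rewrite take_oversize ?size_rcons //; congr (_ ++ _).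
congr flatten; apply/eq_in_map => p Hp.
have : p.1 \in unzip1 (zip (iota 0 (size al)) al) by apply: map_f.
rewrite unzip1_zip ?size_iota // mem_iota add0n => Hk.
by rewrite -cats1 takel_cat.
Qed.

Lemma deltas_cat x s1 s2 :
  deltas delta x (s1 ++ s2) = obind (fun y => deltas delta y s2) (deltas delta x s1).
Proof.
elim: s1 x => [|e s1 IH] x //=.
by case: (delta x e) => //= y.
Qed.

Lemma xis_cat z s1 s2 :
  xis xi z (s1 ++ s2) = obind (fun y => xis xi y s2) (xis xi z s1).
Proof.
elim: s1 z => [|e s1 IH] z //=.
by case: (xi z e) => //= y.
Qed.

Lemma P_rcons s e : P So (rcons s e) = if e \in So then rcons (P So s) e else P So s.
Proof. by rewrite /P filter_rcons. Qed.

Lemma P_cat s1 s2 : P So (s1 ++ s2) = P So s1 ++ P So s2.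
Proof. by rewrite /P filter_cat. Qed.

Lemma Lsup_rcons T x0 s e :
  Lsup delta So T x0 (rcons s e) <->
  [/\ Lsup delta So T x0 s, inLG delta x0 (rcons s e) & e \in T (P So s)].
Proof.
split; last by case=> *; constructor.
move=> H; remember (rcons s e) as t eqn:Ht; case: H Ht.
  by case: s.
by move=> s' e' H1 H2 H3 /rcons_inj [<- <-]; split.
Qed.

Lemma Lsup_prefix T x0 s1 s2 :
  Lsup delta So T x0 (s1 ++ s2) -> Lsup delta So T x0 s1.
Proof.
elim/last_ind: s2 => [|s2 e IH]; first by rewrite cats0.
by rewrite -rcons_cat => /Lsup_rcons [/IH].
Qed.

Lemma uo_in_rcons g w e : uo_in So g (rcons w e) = uo_in So g w && ((e \notin So) && (e \in g)).
Proof. by rewrite /uo_in all_rcons andbC. Qed.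

Lemma uo_in_P g w : uo_in So g w -> P So w = [::].
Proof.
elim: w => [|e w IH] //= /andP [/andP [He _] Hw].
by rewrite /P /= (negbTE He); apply: IH.
Qed.

Lemma Lsup_uo T x0 s w :
  Lsup delta So T x0 (s ++ w) -> P So w = [::] -> uo_in So (T (P So s)) w.
Proof.
elim/last_ind: w => [|w e IH] //.
rewrite -rcons_cat P_rcons => /Lsup_rcons [H1 _ H3].
case: ifP => He; first by case: (P So w).
move=> Hw; rewrite uo_in_rcons He.
by rewrite P_cat Hw cats0 in H3; rewrite H3 IH.
Qed.

Lemma Lsup_ext T x0 s w :
  Lsup delta So T x0 s -> uo_in So (T (P So s)) w ->
  deltas delta x0 (s ++ w) != None -> Lsup delta So T x0 (s ++ w).
Proof.
move=> Hs; elim/last_ind: w => [|w e IH]; first by rewrite cats0.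
rewrite uo_in_rcons => /andP [Hw /andP [_ He]] Hd.
rewrite -rcons_cat; constructor.
- apply: IH => //; move: Hd; rewrite -rcons_cat -cats1 deltas_cat.
  by case: (deltas delta x0 (s ++ w)).
- by rewrite /inLG rcons_cat.
- by rewrite P_cat (uo_in_P Hw) cats0.
Qed.

Lemma P_decomp s g e : e \in So -> P So s = rcons g e ->
  exists s1 u, [/\ s = s1 ++ e :: u, P So s1 = g & P So u = [::]].
Proof.
move=> He; elim/last_ind: s => [|s e' IH]; first by rewrite /P /=; case: g.
rewrite P_rcons; case: ifP => He' H.
  move/rcons_inj: H => [H1 H2]; subst e'.
  by exists s, [::]; rewrite cats1.
have [s1 [u [-> H1 H2]]] := IH H.
exists s1, (rcons u e'); split => //.
  by rewrite rcons_cat.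
by rewrite P_rcons He'.
Qed.

Lemma deltas_prefix x s1 s2 : deltas delta x (s1 ++ s2) != None -> deltas delta x s1 != None.
Proof. by rewrite deltas_cat; case: (deltas delta x s1). Qed.

End Aux.

Section Main.
Variables (X Sigma Z : finType) (delta : X -> Sigma -> option X)
  (X0 : {set X}) (So Sv : {set Sigma}) (S : seq Sigma -> {set Sigma})
  (xi : Z -> Sigma -> option Z) (z0 : Z) (A : seq Sigma -> option Sigma).
Hypothesis Hloop : forall z e z', xi z e = Some z' -> z' != z -> e \in So.
Hypothesis Hreal : forall x0 s, x0 \in X0 -> Lsup delta So S x0 s ->
     exists z, xis xi z0 s = Some z /\ DeltaH xi z = S (P So s).
Hypothesis HSv : Sv \subset So.
Hypothesis Hatt : is_attacker delta So Sv X0 A.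

Local Notation est := (estimate delta So S X0).
Local Notation Ls := (Lsup delta So).

Lemma UR_mem g q x : x \in UR delta So g q <->
  exists y w, [/\ y \in q, uo_in So g w & deltas delta y w = Some x].
Proof. by rewrite inE; split => /asboolP. Qed.

Lemma URt_mem g qt p : p \in URt delta So g qt <->
  exists p0 w, [/\ p0 \in qt, uo_in So g w, p.1 = p0.1 & deltas delta p0.2 w = Some p.2].
Proof. by rewrite inE; split => /asboolP. Qed.

Lemma NX_mem e q y : y \in NX delta e q <-> exists2 x, x \in q & delta x e = Some y.
Proof.
rewrite inE; split.
  by case/existsP => x /andP [Hx /eqP H]; exists x.
by case=> x Hx H; apply/existsP; exists x; rewrite Hx H eqxx.
Qed.

Lemma NXt_mem e qt p : p \in NXt delta e qt <->
  exists2 p0, p0 \in qt & p0.1 = p.1 /\ delta p0.2 e = Some p.2.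
Proof.
rewrite inE; split.
  by case/existsP => x /andP [Hx /andP [/eqP H1 /eqP H2]]; exists x.
by case=> x Hx [H1 H2]; apply/existsP; exists x; rewrite Hx H1 H2 !eqxx.
Qed.

Lemma xis_P z s z' : xis xi z s = Some z' -> xis xi z (P So s) = Some z'.
Proof.
elim: s z => [|e s IH] z //=.
case Hz: (xi z e) => [y|] //= Hy.
rewrite /P /=; case: ifP => He /=.
  by rewrite Hz /=; apply: IH.
have Eyz : y = z.
  by apply/eqP; apply: contraFT He => Hne; apply: Hloop Hz Hne.
by subst y; apply: IH.
Qed.

Lemma DeltaH_of g x z : est g x -> xis xi z0 g = Some z -> DeltaH xi z = S g.
Proof.
case=> x0 [s [Hx0 Hs HPs _]] Hz.
have [zz [H1 H2]] := Hreal Hx0 Hs.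
have := xis_P H1; rewrite HPs Hz => -[->].
by rewrite H2 HPs.
Qed.

Lemma est_UR g y w x : est g y -> uo_in So (S g) w -> deltas delta y w = Some x -> est g x.
Proof.
case=> x0 [s [Hx0 Hs HPs Hy]] Hw Hd.
exists x0, (s ++ w); split => //.
- apply: Lsup_ext => //; first by rewrite HPs.
  by rewrite deltas_cat Hy /= Hd.
- by rewrite P_cat HPs (uo_in_P Hw) cats0.
- by rewrite deltas_cat Hy /= Hd.
Qed.

Lemma P_last s g e : P So s = rcons g e -> e \in So.
Proof.
move=> H; have : e \in P So s by rewrite H mem_rcons mem_head.
by rewrite mem_filter => /andP [].
Qed.

Lemma Lsup_inLG T x0 s : Ls T x0 s -> inLG delta x0 s.
Proof. by case. Qed.

Lemma est_prefix g a x : est (rcons g a) x -> exists y, est g y.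
Proof.
case=> x0 [s [Hx0 Hs HPs Hx]].
have Ha := P_last HPs.
have [s1 [u [Es HP1 _]]] := P_decomp Ha HPs.
have Hs1 : Ls S x0 s1 by apply: (Lsup_prefix (s2 := a :: u)); rewrite -Es.
have := Lsup_inLG Hs1; rewrite /inLG.
case Hd: (deltas delta x0 s1) => [y|] // _.
by exists y, x0, s1.
Qed.

Lemma inPLsup_prefix T b e : inPLsup delta So T X0 (rcons b e) -> inPLsup delta So T X0 b.
Proof.
case=> x0 [s [Hx0 Hs HPs]].
have Ha := P_last HPs.
have [s1 [u [Es HP1 _]]] := P_decomp Ha HPs.
exists x0, s1; split => //.
by apply: (Lsup_prefix (s2 := e :: u)); rewrite -Es.
Qed.

Lemma stealthy_prefix b e : stealthy delta So S X0 A (rcons b e) -> stealthy delta So S X0 A b.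
Proof.
rewrite /stealthy gA_rcons; case: (A (rcons b e)) => [a|] /= [x].
  by rewrite cats1 => /est_prefix.
by rewrite cats0 => H; exists x.
Qed.

Definition Inv b q qt z :=
  [/\ xis xi z0 (gA A b) = Some z, DeltaH xi z = S (gA A b),
   forall x, x \in UR delta So (DeltaH xi z) q <-> est (gA A b) x
 & forall x0 s x, x0 \in X0 -> Ls (SA S A) x0 s -> P So s = b -> deltas delta x0 s = Some x ->
     (x0, x) \in URt delta So (DeltaH xi z) qt].

Lemma qt_step b e qt g : e \in So ->
  (forall x0 s x, x0 \in X0 -> Ls (SA S A) x0 s -> P So s = b -> deltas delta x0 s = Some x ->
     (x0, x) \in URt delta So g qt) ->
  forall x0 s x, x0 \in X0 -> Ls (SA S A) x0 s -> P So s = rcons b e -> deltas delta x0 s = Some x ->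
     (x0, x) \in URt delta So (SA S A (rcons b e)) (NXt delta e (URt delta So g qt)).
Proof.
move=> He Hqt x0 s x Hx0 Hs HPs Hx.
have [s1 [u [Es HP1 HPu]]] := P_decomp He HPs.
have Hs1e : Ls (SA S A) x0 (rcons s1 e ++ u) by rewrite cat_rcons -Es.
have Hu := Lsup_uo Hs1e HPu.
have /Lsup_rcons [Hs1 HL1 _] := Lsup_prefix Hs1e.
move: HL1; rewrite /inLG -cats1 deltas_cat.
case Hy1: (deltas delta x0 s1) => [y1|] //=.
case Hy2: (delta y1 e) => [y2|] //= _.
have H1 := Hqt x0 s1 y1 Hx0 Hs1 HP1 Hy1.
apply/URt_mem; exists (x0, y2), u; split => //.
- by apply/NXt_mem; exists (x0, y1).
- by rewrite P_rcons He HP1 in Hu.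
- move: Hx; rewrite Es -cat_rcons deltas_cat -cats1 deltas_cat Hy1 /= Hy2 /=.
  by [].
Qed.


Lemma est_rcons_dec g a x : a \in So -> est (rcons g a) x ->
  exists (u : seq Sigma) w1 w2, [/\ est g w1, delta w1 a = Some w2, a \in S g,
     uo_in So (S (rcons g a)) u & deltas delta w2 u = Some x].
Proof.
move=> HaS [x1 [s' [Hx1 Hs' HPs' Hd']]].
have [s1' [u' [Es' HP1' HPu']]] := P_decomp HaS HPs'.
have Hs1a : Ls S x1 (rcons s1' a ++ u') by rewrite cat_rcons -Es'.
have Hu := Lsup_uo Hs1a HPu'.
have /Lsup_rcons [Hs1' HL1' Ha1'] := Lsup_prefix Hs1a.
move: HL1'; rewrite /inLG -cats1 deltas_cat.
case Hz1: (deltas delta x1 s1') => [w1|] //=.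
case Hz2: (delta w1 a) => [w2|] //= _.
exists u', w1, w2; split => //.
- by exists x1, s1'.
- by rewrite -HP1'.
- by rewrite P_rcons HaS HP1' in Hu.
- by move: Hd'; rewrite Es' -cat_rcons deltas_cat -cats1 deltas_cat Hz1 /= Hz2.
Qed.

Lemma step b e q qt z : Inv b q qt z -> e \in So -> inPLsup delta So (SA S A) X0 (rcons b e) ->
  exists (q' : {set X}) (qt' : {set X * X}) (oz' : option Z),
    frun delta So xi Sv (Env Sigma q qt (Some z)) [:: Ev e; hatsym (A (rcons b e))] = Some (Env Sigma q' qt' oz')
    /\ (stealthy delta So S X0 A (rcons b e) <-> oz' != None)
    /\ (stealthy delta So S X0 A (rcons b e) -> forall z', oz' = Some z' -> Inv (rcons b e) q' qt' z').
Proof.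
move=> [Hxz HDz Hq Hqt] He Hin.
have Hin' := Hin; case: Hin' => x0 [s [Hx0 Hs HPs]].
have [s1 [u [Es HP1 HPu]]] := P_decomp He HPs.
have Hs1e : Ls (SA S A) x0 (rcons s1 e ++ u) by rewrite cat_rcons -Es.
have /Lsup_rcons [Hs1 HL1 He1] := Lsup_prefix Hs1e.
move: HL1; rewrite /inLG -cats1 deltas_cat.
case Hy1: (deltas delta x0 s1) => [y1|] //=.
case Hy2: (delta y1 e) => [y2|] //= _.
have HObs : e \in Obs delta So qt (DeltaH xi z).
  have /URt_mem [p0 [w [Hp0 Hw Hp01 Hdw]]] := Hqt x0 s1 y1 Hx0 Hs1 HP1 Hy1.
  have He1' : e \in S (gA A b) by rewrite -HP1.
  rewrite inE He /= HDz He1' /=.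
  apply/asboolP; exists p0, w; split => //; first by rewrite -HDz.
  by rewrite -cats1 deltas_cat Hdw /= Hy2.
have HinPLG : inPLG delta So X0 (rcons b e).
  by exists x0, s; split => //; apply: Lsup_inLG Hs.
case: Hatt => _ /(_ b e HinPLG) [Hnv Hv].
have HVp : Vpred Sv e (A (rcons b e)).
  rewrite /Vpred; case: ifP => HeSv; first by move: (Hv HeSv); case: (A (rcons b e)).
  by rewrite Hnv ?HeSv.
have HaSo : forall a, A (rcons b e) = Some a -> a \in So.
  move=> a Ha; case HeSv: (e \in Sv).
    by move: (Hv HeSv); rewrite Ha => /(subsetP HSv).
  by move: (Hnv (negbT HeSv)); rewrite Ha => -[->].
have Eg := gA_rcons A b e.
have Hqt' := qt_step He Hqt.
rewrite /frun /= HObs /=.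
case Ha: (A (rcons b e)) HVp Eg => [a|] /= HVp Eg; rewrite /attstep HVp /=.
- have HaS := HaSo a Ha.
  rewrite cats1 in Eg.
  set q' := NX delta a (UR delta So (DeltaH xi z) q).
  eexists q', _, _; split; first reflexivity.
  have Hfwd : forall y2, y2 \in q' -> xi z a != None -> est (rcons (gA A b) a) y2.
    move=> y /NX_mem [y' Hy' Hyy] Hxa.
    have [x1 [s' [Hx1 Hs' HPs' Hd']]] := (Hq y').1 Hy'.
    exists x1, (rcons s' a); split => //.
    + constructor => //; first by rewrite /inLG -cats1 deltas_cat Hd' /= Hyy.
      by rewrite HPs' -HDz inE.
    + by rewrite P_rcons HaS HPs'.
    + by rewrite -cats1 deltas_cat Hd' /= Hyy.
  have Hst : stealthy delta So S X0 A (rcons b e) <-> (q' != set0) && (xi z a != None).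
    rewrite /stealthy Eg; split.
    * case=> x /(est_rcons_dec HaS) [u' [w1 [w2 [Hw1 Hw2 Ha1 _ _]]]].
      apply/andP; split.
        apply/set0Pn; exists w2; apply/NX_mem; exists w1 => //.
        by apply/(Hq w1).
      by move: Ha1; rewrite -HDz inE.
    * case/andP => /set0Pn [y Hy] Hxa; exists y; exact: Hfwd.
  split.
    split => [/Hst | H]; first by case: (q' != set0).
    by apply/Hst; move: H; case: (q' != set0).
  move=> Hstl z'; case Hq0: (q' != set0) => // Hxa.
  have Hxz' : xis xi z0 (gA A (rcons b e)) = Some z' by rewrite Eg -cats1 xis_cat Hxz /= Hxa.
  have HDz' : DeltaH xi z' = S (gA A (rcons b e)).
    by case: Hstl => x Hx; apply: (DeltaH_of Hx).
  split => //.
  + move=> x; rewrite Eg; split.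
      case/UR_mem => y [w [Hy Hw Hd]].
      apply: est_UR (Hfwd y Hy _) _ Hd; first by rewrite Hxa.
      by rewrite -Eg -HDz'.
    case/(est_rcons_dec HaS) => [u' [w1 [w2 [Hw1 Hw2 Ha1 Hu' Hd]]]].
    apply/UR_mem; exists w2, u'; split => //.
      by apply/NX_mem; exists w1 => //; apply/(Hq w1).
    by rewrite HDz' Eg.
  + move=> x0' s' x' H1 H2 H3 H4; have := Hqt' x0' s' x' H1 H2 H3 H4.
    by rewrite /SA HDz'.
- rewrite cats0 in Eg.
  set q' := UR delta So (DeltaH xi z) q.
  eexists q', _, _; split; first reflexivity.
  have Hst : stealthy delta So S X0 A (rcons b e) <-> (q' != set0).
    rewrite /stealthy Eg; split.
      by case=> x /(Hq x) Hx; apply/set0Pn; exists x.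
    by case/set0Pn => x /(Hq x) Hx; exists x.
  split.
    split => [/Hst | H]; first by case: (q' != set0).
    by apply/Hst; move: H; case: (q' != set0).
  move=> Hstl z'; case Hq0: (q' != set0) => // -[<-].
  split => //; rewrite ?Eg //.
  + move=> x; split.
      case/UR_mem => y [w [Hy Hw Hd]].
      apply: est_UR ((Hq y).1 Hy) _ Hd; by rewrite -HDz.
    move/(Hq x) => Hx; apply/UR_mem; exists x, [::]; split => //.
  + move=> x0' s' x' H1 H2 H3 H4; have := Hqt' x0' s' x' H1 H2 H3 H4.
    by rewrite /SA Eg -HDz.
Qed.


Lemma run b : inPLsup delta So (SA S A) X0 b -> stealthy delta So S X0 A b ->
  exists q qt z, frun delta So xi Sv (q0M Sigma X0 z0) (extA A b) = Some (Env Sigma q qt (Some z))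
    /\ Inv b q qt z.
Proof.
elim/last_ind: b => [|b e IH] Hin Hst.
- exists X0, [set p | (p.1 \in X0) && (p.2 == p.1)], z0; split.
    by rewrite /extA.
  have Eg : gA A [::] = [::] by [].
  case: Hst => x; rewrite Eg => Hx.
  have HD0 : DeltaH xi z0 = S [::] by apply: (DeltaH_of Hx).
  split; rewrite ?Eg //.
  + move=> y; split.
      case/UR_mem => x0 [w [Hx0 Hw Hd]].
      apply: (est_UR (y:=x0)) Hd; last by rewrite -HD0.
      by exists x0, [::]; split => //; constructor.
    case=> x0 [s [Hx0 Hs HPs Hd]]; apply/UR_mem; exists x0, s; split => //.
    by have := Lsup_uo (s:=[::]) Hs HPs; rewrite HD0.
  + move=> x0 s x1 Hx0 Hs HPs Hd; apply/URt_mem; exists (x0, x0), s; split => //.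
      by rewrite inE /= Hx0 eqxx.
    by have := Lsup_uo (s:=[::]) Hs HPs; rewrite HD0.
- have He : e \in So by case: Hin => x0 [s [_ _ HPs]]; apply: P_last HPs.
  have [q [qt [z [Hr Hinv]]]] := IH (inPLsup_prefix Hin) (stealthy_prefix Hst).
  have [q' [qt' [oz' [Hr' [Hiff Hinv']]]]] := step Hinv He Hin.
  have Hne : oz' != None by apply/Hiff.
  case: oz' Hr' Hiff Hinv' Hne => [z'|] // Hr' Hiff Hinv' _.
  exists q', qt', z'; split; last by apply: Hinv'.
  by move: Hr Hr'; rewrite extA_rcons /frun foldl_cat => ->.
Qed.

End Main.

Theorem lemma1 (X Sigma Z : finType) (delta : X -> Sigma -> option X)
  (X0 : {set X}) (So Suc Sv : {set Sigma}) (S : seq Sigma -> {set Sigma})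
  (xi : Z -> Sigma -> option Z) (z0 : Z) (A : seq Sigma -> option Sigma)
  (alpha : seq Sigma) (sigma : Sigma) :
  is_supervisor delta So Suc X0 S ->
  realizes delta So xi X0 S z0 ->
  Sv \subset So ->
  is_attacker delta So Sv X0 A ->
  sigma \in So ->
  inPLsup delta So (SA S A) X0 (rcons alpha sigma) ->
  stealthy delta So S X0 A alpha ->
  exists qe,
    frun delta So xi Sv (q0M Sigma X0 z0) (extA A (rcons alpha sigma)) = Some qe /\
    (stealthy delta So S X0 A (rcons alpha sigma) <-> ~~ in_Qatt qe).
Proof.
move=> _ [Hloop Hreal] HSv Hatt He Hin Hst.
have [q [qt [z [Hr Hinv]]]] := run Hloop Hreal HSv Hatt (inPLsup_prefix Hin) Hst.
have [q' [qt' [oz' [Hr' [Hiff _]]]]] := step Hloop Hreal HSv Hatt Hinv He Hin.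
exists (Env Sigma q' qt' oz'); split.
  by move: Hr Hr'; rewrite extA_rcons /frun foldl_cat => ->.
by rewrite Hiff; clear Hr' Hiff; case: oz'.
Qed.
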